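(* Assume (H1) and (H2). Then, as $z\to\infty$: (i) $q(z)\,|\mathfrak m'(z)|=2q(z)e^{\gamma(z)}\int_z^\infty e^{-\gamma(\xi)}d\xi\to1$; (ii) $\mathfrak m(z)/M(z)\to1$, where $M(z)=\int_z^\infty dy/q(y)$ (finite for large $z$); (iii) $\dfrac{\int_z^\infty e^{\gamma(y)}\big(\int_y^\infty e^{-\gamma(\xi)}d\xi\big)^2dy}{e^{2\gamma(z)}\big(\int_z^\infty e^{-\gamma(\xi)}d\xi\big)^3}\to1$; (iv) $\dfrac{8\int_z^\infty e^{\gamma(y)}\int_y^\infty e^{\gamma(\eta)}\big(\int_\eta^\infty e^{-\gamma(\xi)}d\xi\big)^2d\eta\,dy}{\int_z^\infty q(y)^{-3}dy}\to1$.
   Context: Let $q\in C^1([0,\infty))$ and $\gamma(y)=2\int_0^yq$. (H1): $\int_0^\infty e^{\gamma(y)}\int_y^\infty e^{-\gamma(\xi)}d\xi\,dy<\infty$. (H2): $\lim_{x\to\infty}q(x)=\infty$ and $\lim_{x\to\infty}q'(x)/q(x)^2=0$. $\mathfrak m(z)=2\int_z^\infty e^{\gamma(y)}\int_y^\infty e^{-\gamma(\xi)}d\xi\,dy$, so $\mathfrak m'(z)=-2e^{\gamma(z)}\int_z^\infty e^{-\gamma(\xi)}d\xi$. *)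

(* Defs.v *)
From Stdlib Require Import Reals Lra Classical ClassicalEpsilon.
Open Scope R_scope.

Definition is_RInt (f : R -> R) (a b v : R) : Prop :=
  exists pr : Riemann_integrable f a b, RiemannInt pr = v.

(* The Riemann integral of f over [a,b] (0 if f is not Riemann integrable). *)
Definition Rint (f : R -> R) (a b : R) : R :=
  match excluded_middle_informative (exists v, is_RInt f a b v) with
  | left H => proj1_sig (constructive_indefinite_description _ H)
  | right _ => 0
  end.

Definition lim_infty (g : R -> R) (l : R) : Prop :=
  forall eps, 0 < eps -> exists A, forall x, A <= x -> Rabs (g x - l) < eps.

Definition tends_pinfty (g : R -> R) : Prop :=
  forall B, exists A, forall x, A <= x -> B <= g x.

Definition is_ImpInt (f : R -> R) (a l : R) : Prop :=
  (forall b, a <= b -> inhabited (Riemann_integrable f a b)) /\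
  lim_infty (fun b => Rint f a b) l.

Definition ImpInt_conv (f : R -> R) (a : R) : Prop := exists l, is_ImpInt f a l.

(* \int_a^\infty f (0 if it does not converge). *)
Definition ImpInt (f : R -> R) (a : R) : R :=
  match excluded_middle_informative (ImpInt_conv f a) with
  | left H => proj1_sig (constructive_indefinite_description _ H)
  | right _ => 0
  end.

Definition cont_nonneg (f : R -> R) (x : R) : Prop :=
  forall eps, 0 < eps -> exists delta, 0 < delta /\
    forall y, 0 <= y -> Rabs (y - x) < delta -> Rabs (f y - f x) < eps.

Definition C1_nonneg (q dq : R -> R) : Prop :=
  (forall x, 0 < x -> derivable_pt_lim q x (dq x)) /\
  (forall eps, 0 < eps -> exists delta, 0 < delta /\
     forall h, 0 < h < delta -> Rabs ((q h - q 0) / h - dq 0) < eps) /\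
  (forall x, 0 <= x -> cont_nonneg q x) /\
  (forall x, 0 <= x -> cont_nonneg dq x).

Definition gam (q : R -> R) (y : R) : R := 2 * Rint q 0 y.

Definition Itail (q : R -> R) (y : R) : R :=
  ImpInt (fun xi => exp (- gam q xi)) y.

Definition mfrak (q : R -> R) (z : R) : R :=
  2 * ImpInt (fun y => exp (gam q y) * Itail q y) z.

Definition Mfun (q : R -> R) (z : R) : R := ImpInt (fun y => / q y) z.

Definition Jtail (q : R -> R) (z : R) : R :=
  ImpInt (fun y => exp (gam q y) * (Itail q y) ^ 2) z.

(* Main.v *)
Require Import Defs.
From Stdlib Require Import Reals Lra Classical ClassicalEpsilon.
From Coquelicot Require Import Coquelicot.
Open Scope R_scope.

Lemma lim_infty_is_lim g l : lim_infty g l <-> is_lim g p_infty l.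
Proof.
  rewrite <- is_lim_spec. simpl. split.
  - intros H eps. destruct (H eps (cond_pos eps)) as [A HA].
    exists A. intros x Hx. apply HA. lra.
  - intros H eps Heps. destruct (H (mkposreal eps Heps)) as [A HA].
    exists (A + 1). intros x Hx. apply HA. lra.
Qed.

Lemma tends_pinfty_is_lim g : tends_pinfty g -> is_lim g p_infty p_infty.
Proof.
  intros H. rewrite <- is_lim_spec. simpl. intros M.
  destruct (H (M + 1)) as [A HA]. exists A. intros x Hx.
  specialize (HA x). lra.
Qed.

Lemma lim_mult f g a b : is_lim f p_infty (Finite a) -> is_lim g p_infty (Finite b) ->
  is_lim (fun x => f x * g x) p_infty (a * b).
Proof. intros Hf Hg. apply (is_lim_mult f g p_infty a b Hf Hg). simpl. exact I. Qed.

Lemma lim_plus f g a b : is_lim f p_infty (Finite a) -> is_lim g p_infty (Finite b) ->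
  is_lim (fun x => f x + g x) p_infty (a + b).
Proof. intros Hf Hg. apply (is_lim_plus f g p_infty a b); auto. simpl. constructor. Qed.

Lemma lim_minus f g a b : is_lim f p_infty (Finite a) -> is_lim g p_infty (Finite b) ->
  is_lim (fun x => f x - g x) p_infty (a - b).
Proof. intros Hf Hg. apply (is_lim_minus f g p_infty a b); auto. simpl. constructor. Qed.

Lemma lim_inv f a : is_lim f p_infty (Finite a) -> a <> 0 ->
  is_lim (fun x => / f x) p_infty (/ a).
Proof. intros Hf Ha. apply (is_lim_inv f p_infty a Hf). intro E. apply Ha. now injection E. Qed.

Lemma lim_ev f g l : (exists A, forall x, A <= x -> f x = g x) ->
  is_lim f p_infty l -> is_lim g p_infty l.
Proof.
  intros [A HA] H. apply (is_lim_ext_loc f g); auto. exists A. intros x Hx. apply HA. lra.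
Qed.

Lemma lim_ev_pt f l : is_lim f p_infty (Finite l) ->
  (forall e, 0 < e -> exists A, forall x, A <= x -> Rabs (f x - l) < e).
Proof.
  intros H e He. rewrite <- is_lim_spec in H. destruct (H (mkposreal e He)) as [A HA].
  exists (A + 1). intros x Hx. apply HA. lra.
Qed.
Lemma Rint_RiemannInt f a b (pr : Riemann_integrable f a b) : Rint f a b = RiemannInt pr.
Proof.
  unfold Rint. destruct excluded_middle_informative as [H|H].
  - destruct constructive_indefinite_description as [v [pr' Hv]]. simpl.
    rewrite <- Hv. apply RiemannInt_P5.
  - exfalso; apply H. exists (RiemannInt pr). exists pr. reflexivity.
Qed.

Lemma Rint_RInt f a b : ex_RInt f a b -> Rint f a b = RInt f a b.
Proof.
  intros H. rewrite (Rint_RiemannInt f a b (ex_RInt_Reals_0 f a b H)).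
  symmetry. apply RInt_Reals.
Qed.

Definition isI (f : R -> R) (a l : R) : Prop :=
  (forall b, a <= b -> ex_RInt f a b) /\ is_lim (fun b => RInt f a b) p_infty l.

Lemma isI_iff f a l : is_ImpInt f a l <-> isI f a l.
Proof.
  split.
  - intros [Hi Hl]. assert (He : forall b, a <= b -> ex_RInt f a b).
    { intros b Hb. destruct (Hi b Hb) as [pr]. now apply ex_RInt_Reals_1. }
    split; auto. apply lim_infty_is_lim in Hl. apply (lim_ev (fun b => Rint f a b)); auto.
    exists a. intros. now apply Rint_RInt, He.
  - intros [He Hl]. split.
    + intros b Hb. constructor. now apply ex_RInt_Reals_0, He.
    + apply lim_infty_is_lim. apply (lim_ev (fun b => RInt f a b)); auto.
      exists a. intros. symmetry. now apply Rint_RInt, He.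
Qed.

Lemma lim_infty_unique g l1 l2 : lim_infty g l1 -> lim_infty g l2 -> l1 = l2.
Proof.
  intros H1 H2. apply lim_infty_is_lim, is_lim_unique in H1.
  apply lim_infty_is_lim, is_lim_unique in H2. rewrite H1 in H2. now injection H2.
Qed.

Lemma ImpInt_eq f a l : isI f a l -> ImpInt f a = l.
Proof.
  intros H. apply isI_iff in H. unfold ImpInt. destruct excluded_middle_informative as [C|C].
  - destruct constructive_indefinite_description as [v Hv]. simpl.
    apply (lim_infty_unique (fun b => Rint f a b)); [apply Hv | apply H].
  - exfalso. apply C. now exists l.
Qed.

Lemma conv_isI f a : ImpInt_conv f a -> isI f a (ImpInt f a).
Proof.
  intros [l Hl]. pose proof Hl as H. apply isI_iff in H. now rewrite (ImpInt_eq f a l H).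
Qed.

Lemma isI_conv f a l : isI f a l -> ImpInt_conv f a.
Proof. intros H. exists l. now apply isI_iff. Qed.

Lemma isI_shift f a l z : isI f a l -> a <= z -> isI f z (l - RInt f a z).
Proof.
  intros [He Hl] Hz. assert (Hz' : forall b, z <= b -> ex_RInt f z b).
  { intros b Hb. apply (ex_RInt_Chasles_2 f a). lra. apply He. lra. }
  split; auto.
  apply (lim_ev (fun b => RInt f a b - RInt f a z)).
  - exists z. intros b Hb. rewrite <- (RInt_Chasles f a z b); auto.
    unfold plus; simpl. ring.
  - apply lim_minus; auto. apply is_lim_const.
Qed.

Lemma ImpInt_shift f a l z : isI f a l -> a <= z -> ImpInt f z = l - RInt f a z.
Proof. intros. apply ImpInt_eq. now apply isI_shift. Qed.

Lemma isI_nonneg f a l : (forall x, a <= x -> 0 <= f x) -> isI f a l -> 0 <= l.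
Proof.
  intros Hp [He Hl].
  assert (Hle := is_lim_le_loc (fun _ => 0) (fun b => RInt f a b) p_infty 0 l).
  simpl in Hle. apply Hle; auto.
  - exists a. intros b Hb. apply RInt_ge_0; auto. lra. apply He; lra.
    intros; apply Hp; lra.
  - apply is_lim_const.
Qed.

Lemma isI_le f a l b : (forall x, a <= x -> 0 <= f x) -> isI f a l -> a <= b -> RInt f a b <= l.
Proof.
  intros Hp H Hb. assert (H2 := isI_shift f a l b H Hb).
  apply isI_nonneg in H2. lra. intros; apply Hp; lra.
Qed.

Lemma isI_pos f a l : (forall x, a <= x -> 0 < f x) -> (forall x, a <= x -> continuous f x) ->
  isI f a l -> 0 < l.
Proof.
  intros Hp Hc H. assert (H2 := isI_shift f a l (a+1) H ltac:(lra)).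
  apply isI_nonneg in H2. 2: intros; apply Rlt_le, Hp; lra.
  assert (0 < RInt f a (a+1)). { apply RInt_gt_0. lra. intros; apply Hp; lra. intros; apply Hc; lra. }
  lra.
Qed.

Lemma isI_tail0 f a l : isI f a l -> is_lim (fun z => ImpInt f z) p_infty 0.
Proof.
  intros H. apply (lim_ev (fun z => l - RInt f a z)).
  - exists a. intros z Hz. symmetry. now apply ImpInt_shift.
  - replace (Finite 0) with (Finite (l - l)) by (f_equal; ring).
    apply lim_minus. apply is_lim_const. apply H.
Qed.

Lemma isI_derive f a l x : isI f a l -> a < x -> continuous f x ->
  is_derive (fun z => ImpInt f z) x (- f x).
Proof.
  intros H Hx Hc.
  apply (is_derive_ext_loc (fun z => l - RInt f a z)).
  - exists (mkposreal (x - a) ltac:(lra)). intros y Hy. symmetry. apply ImpInt_shift; auto.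
    cbn in Hy. unfold ball in Hy; simpl in Hy. unfold AbsRing_ball, abs, minus, plus, opp in Hy; simpl in Hy.
    apply Rabs_lt_between in Hy. lra.
  - replace (- f x) with (0 - f x) by ring. apply (is_derive_minus (fun _ => l)).
    apply is_derive_Reals, derivable_pt_lim_const.
    apply (is_derive_RInt f (fun b => RInt f a b) a x); auto.
    exists (mkposreal (x - a) ltac:(lra)). intros y Hy. apply (RInt_correct (V:=R_CompleteNormedModule)).
    cbn in Hy. unfold ball in Hy; simpl in Hy. unfold AbsRing_ball, abs, minus, plus, opp in Hy; simpl in Hy.
    apply Rabs_lt_between in Hy. destruct H as [He _]. apply He. lra.
Qed.
Lemma RInt_scalR (f : R -> R) a b k : ex_RInt f a b -> RInt (fun x => k * f x) a b = k * RInt f a b.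
Proof. intros H. exact (RInt_scal (V:=R_CompleteNormedModule) f a b k H). Qed.

Lemma ex_RInt_scalR (f : R -> R) a b k : ex_RInt f a b -> ex_RInt (fun x => k * f x) a b.
Proof. intros H. exact (ex_RInt_scal (V:=R_NormedModule) f a b k H). Qed.

Lemma ex_cont (f : R -> R) a b : (forall x, a <= x -> continuous f x) -> a <= b -> ex_RInt f a b.
Proof.
  intros Hc Hab. apply (ex_RInt_continuous (V:=R_CompleteNormedModule)). intros z Hz.
  apply Hc. rewrite Rmin_left in Hz; lra.
Qed.

Lemma RInt_mono (f : R -> R) a b0 b : (forall x, a <= x -> 0 <= f x) ->
  (forall b, a <= b -> ex_RInt f a b) -> a <= b0 <= b -> RInt f a b0 <= RInt f a b.
Proof.
  intros Hp He Hb. rewrite <- (RInt_Chasles f a b0 b).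
  - unfold plus; simpl. assert (0 <= RInt f b0 b); [|lra].
    apply RInt_ge_0. lra. apply (ex_RInt_Chasles_2 f a). lra. apply He; lra.
    intros; apply Hp; lra.
  - apply He; lra.
  - apply (ex_RInt_Chasles_2 f a). lra. apply He; lra.
Qed.

Lemma isI_exists (f h : R -> R) a c lh :
  (forall x, a <= x -> continuous f x) -> 0 <= c -> (forall x, a <= x -> 0 <= h x) ->
  (forall x, a <= x -> 0 <= f x <= c * h x) -> isI h a lh -> exists l, isI f a l.
Proof.
  intros Hc Hc0 Hh0 Hfh Hh.
  assert (He : forall b, a <= b -> ex_RInt f a b) by (intros; now apply ex_cont).
  assert (Hb : forall b, a <= b -> RInt f a b <= c * lh).
  { intros b Hab. apply Rle_trans with (RInt (fun x => c * h x) a b).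
    - apply RInt_le; auto. apply ex_RInt_scalR. apply Hh; auto.
      intros x Hx; apply Hfh; lra.
    - rewrite RInt_scalR by (apply Hh; auto). apply Rmult_le_compat_l; auto.
      apply isI_le; auto. }
  set (E := fun y => exists b, a <= b /\ y = RInt f a b).
  assert (HE : bound E). { exists (c * lh). intros y [b [Hab ->]]. now apply Hb. }
  assert (HE2 : exists y, E y). { exists (RInt f a a). exists a. split; auto; lra. }
  destruct (completeness E HE HE2) as [m [Hm1 Hm2]].
  exists m. split; auto. apply is_lim_spec. simpl. intros eps.
  assert (Hex : exists b0, a <= b0 /\ m - eps < RInt f a b0).
  { apply NNPP. intros Hn. assert (m <= m - eps); [|destruct eps; simpl in *; lra].
    apply Hm2. intros y [b [Hab ->]]. apply Rnot_lt_le. intros Hl. apply Hn. now exists b. }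
  destruct Hex as [b0 [Hab0 Hb0]]. exists b0. intros x Hx.
  assert (RInt f a b0 <= RInt f a x) by (apply RInt_mono; [intros; apply Hfh; auto|auto|lra]).
  assert (RInt f a x <= m) by (apply Hm1; exists x; split; auto; lra).
  apply Rabs_lt_between. destruct eps; simpl in *; lra.
Qed.
Lemma ball_R x (e : posreal) y : ball x e y -> x - e < y < x + e.
Proof.
  intros Hy. unfold ball in Hy; simpl in Hy. unfold AbsRing_ball, abs, minus, plus, opp in Hy; simpl in Hy.
  apply Rabs_lt_between in Hy. lra.
Qed.

Lemma pw_bounds fx gx e : 0 < gx -> Rabs (fx / gx - 1) < e ->
  (1 - e) * gx <= fx <= (1 + e) * gx.
Proof.
  intros Hg Hr. apply Rabs_lt_between in Hr.
  assert (fx = (fx / gx) * gx) by (field; lra). set (r := fx / gx) in *.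
  rewrite H. split; apply Rmult_le_compat_r; lra.
Qed.

Lemma RInt_by_G (g G : R -> R) a k z b : (forall x, a <= x -> continuous g x) ->
  (forall x, a <= x -> is_derive G x (- g x)) -> a <= z <= b ->
  RInt (fun x => k * g x) z b = k * (G z - G b).
Proof.
  intros Hc HG Hz. apply is_RInt_unique.
  assert (H := is_RInt_derive (V:=R_CompleteNormedModule) (fun x => - (k * G x)) (fun x => k * g x) z b).
  replace (k * (G z - G b)) with (minus (- (k * G b)) (- (k * G z))).
  2: unfold minus, plus, opp; simpl; ring.
  apply H.
  - intros x Hx. rewrite Rmin_left in Hx by lra. rewrite Rmax_right in Hx by lra.
    apply is_derive_Reals. replace (k * g x) with (- (k * (- g x))) by ring.
    apply derivable_pt_lim_opp. apply derivable_pt_lim_scal. apply is_derive_Reals, HG. lra.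
  - intros x Hx. rewrite Rmin_left in Hx by lra. rewrite Rmax_right in Hx by lra.
    apply (continuous_mult (fun _ => k) g). apply continuous_const. apply Hc; lra.
Qed.

Lemma isI_ratio (f g G : R -> R) a l :
  (forall x, a <= x -> continuous g x) ->
  (forall x, a <= x -> is_derive G x (- g x)) -> is_lim G p_infty 0 ->
  (forall x, a <= x -> 0 < g x) -> (forall x, a <= x -> 0 < G x) ->
  is_lim (fun x => f x / g x) p_infty 1 -> isI f a l ->
  is_lim (fun z => ImpInt f z / G z) p_infty 1.
Proof.
  intros Hgc HG HG0 Hgp HGp Hfg HI.
  apply is_lim_spec. simpl. intros eps.
  destruct (lim_ev_pt _ _ Hfg (eps/2) ltac:(destruct eps; simpl; lra)) as [A1 HA1].
  exists (Rmax a A1). intros z Hz.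
  assert (Haz : a <= z) by (generalize (Rmax_l a A1); lra).
  assert (HAz : A1 <= z) by (generalize (Rmax_r a A1); lra).
  set (e := eps / 2).
  assert (Hpw : forall x, z <= x -> (1 - e) * g x <= f x <= (1 + e) * g x).
  { intros x Hx. apply pw_bounds. apply Hgp; lra. apply HA1; lra. }
  set (lz := l - RInt f a z).
  assert (Hz' := isI_shift f a l z HI Haz). fold lz in Hz'.
  rewrite (ImpInt_eq f z lz Hz').
  destruct Hz' as [Hez Hlz].
  assert (Hlim : forall k, is_lim (fun b => RInt (fun x => k * g x) z b) p_infty (k * G z)).
  { intros k. apply (lim_ev (fun b => k * (G z - G b))).
    - exists z. intros b Hb. symmetry. apply (RInt_by_G g G a); auto; lra.
    - replace (k * G z) with (k * (G z - 0)) by ring.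
      apply lim_mult. apply is_lim_const. apply lim_minus. apply is_lim_const. apply HG0. }
  assert (Hexg : forall k b, z <= b -> ex_RInt (fun x => k * g x) z b).
  { intros k b Hb. apply ex_RInt_scalR. apply ex_cont; auto. intros; apply Hgc; lra. }
  assert (Hup : lz <= (1 + e) * G z).
  { assert (H := is_lim_le_loc (fun b => RInt f z b) (fun b => RInt (fun x => (1 + e) * g x) z b)
      p_infty lz ((1 + e) * G z)). simpl in H. apply H; auto.
    exists z. intros b Hb. apply RInt_le. lra. apply Hez; lra. apply Hexg; lra.
    intros x Hx. apply Hpw; lra. }
  assert (Hlo : (1 - e) * G z <= lz).
  { assert (H := is_lim_le_loc (fun b => RInt (fun x => (1 - e) * g x) z b) (fun b => RInt f z b)
      p_infty ((1 - e) * G z) lz). simpl in H. apply H; auto.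
    exists z. intros b Hb. apply RInt_le. lra. apply Hexg; lra. apply Hez; lra.
    intros x Hx. apply Hpw; lra. }
  assert (HGz := HGp z Haz).
  assert (lz = (lz / G z) * G z) by (field; lra).
  set (r := lz / G z) in *. rewrite H in Hup, Hlo.
  assert (1 - e <= r) by (apply Rmult_le_reg_r with (G z); auto).
  assert (r <= 1 + e) by (apply Rmult_le_reg_r with (G z); auto).
  apply Rabs_lt_between. unfold e in *. destruct eps; simpl in *; lra.
Qed.
Lemma C_mult (f g : R -> R) x : continuous f x -> continuous g x -> continuous (fun y => f y * g y) x.
Proof. intros. exact (continuous_mult (K:=R_AbsRing) f g x H H0). Qed.
Lemma C_plus (f g : R -> R) x : continuous f x -> continuous g x -> continuous (fun y => f y + g y) x.
Proof. intros. exact (continuous_plus (V:=R_NormedModule) f g x H H0). Qed.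
Lemma C_const (c x : R) : continuous (fun _ : R => c) x.
Proof. apply continuous_const. Qed.
Lemma C_inv (f : R -> R) x : continuous f x -> f x <> 0 -> continuous (fun y => / f y) x.
Proof. intros. now apply continuous_Rinv_comp. Qed.
Lemma C_exp (f : R -> R) x : continuous f x -> continuous (fun y => exp (f y)) x.
Proof. intros. now apply continuous_exp_comp. Qed.
Lemma C_der (f : R -> R) x l : is_derive f x l -> continuous f x.
Proof. intros H. apply (ex_derive_continuous (K:=R_AbsRing) (V:=R_NormedModule)). now exists l. Qed.

Lemma D_eq (f : R -> R) (x a b : R) : is_derive f x a -> @eq R a b -> is_derive f x b.
Proof. now intros H <-. Qed.
Lemma D_mult (f g : R -> R) x a b : is_derive f x a -> is_derive g x b ->
  is_derive (fun y => f y * g y) x (a * g x + f x * b).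
Proof.
  intros Hf Hg. apply is_derive_Reals. apply is_derive_Reals in Hf, Hg.
  replace (a * g x + f x * b) with (a * g x + f x * b) by ring.
  apply (derivable_pt_lim_mult f g x a b Hf Hg).
Qed.
Lemma D_exp (f : R -> R) x a : is_derive f x a -> is_derive (fun y => exp (f y)) x (a * exp (f x)).
Proof.
  intros Hf. apply is_derive_Reals. apply is_derive_Reals in Hf.
  replace (a * exp (f x)) with (exp (f x) * a) by ring.
  apply (derivable_pt_lim_comp f exp x a). exact Hf.
  apply derivable_pt_lim_exp.
Qed.
Lemma D_scal (f : R -> R) x k a : is_derive f x a -> is_derive (fun y => k * f y) x (k * a).
Proof. intros Hf. apply is_derive_Reals. apply is_derive_Reals in Hf. now apply derivable_pt_lim_scal. Qed.
Lemma D_const (c x : R) : is_derive (fun _ => c) x 0.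
Proof. apply is_derive_Reals, derivable_pt_lim_const. Qed.

Lemma cont_nonneg_cont f x : cont_nonneg f x -> 0 < x -> continuous f x.
Proof.
  intros H Hx. apply filterlim_locally. intros eps.
  destruct (H eps (cond_pos eps)) as [d [Hd Hd']].
  exists (mkposreal (Rmin d x) ltac:(apply Rmin_pos; lra)). intros y Hy.
  apply ball_R in Hy. simpl in Hy. generalize (Rmin_l d x) (Rmin_r d x); intros.
  unfold ball; simpl. unfold AbsRing_ball, abs, minus, plus, opp; simpl.
  apply Hd'. lra. apply Rabs_lt_between. lra.
Qed.

Definition qt (q : R -> R) x := q (Rmax 0 x).

Lemma qt_cont q dq : C1_nonneg q dq -> forall x, continuous (qt q) x.
Proof.
  intros [_ [_ [Hq _]]] x. apply filterlim_locally. intros eps.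
  destruct (Hq (Rmax 0 x) (Rmax_l 0 x) eps (cond_pos eps)) as [d [Hd Hd']].
  exists (mkposreal d Hd). intros y Hy. apply ball_R in Hy. simpl in Hy.
  unfold ball; simpl. unfold AbsRing_ball, abs, minus, plus, opp; simpl. unfold qt.
  apply Hd'. apply Rmax_l. apply Rabs_lt_between.
  unfold Rmax; destruct Rle_dec; destruct Rle_dec; lra.
Qed.

Lemma gam_RInt q dq y : C1_nonneg q dq -> 0 <= y -> gam q y = 2 * RInt (qt q) 0 y.
Proof.
  intros HC Hy. unfold gam. assert (He : ex_RInt (qt q) 0 y).
  { apply ex_cont; auto. intros; now apply (qt_cont q dq). }
  assert (He' : ex_RInt q 0 y).
  { apply (ex_RInt_ext (qt q)); auto. intros x Hx. rewrite Rmin_left in Hx by lra.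
    unfold qt. rewrite Rmax_right; lra. }
  rewrite Rint_RInt; auto. f_equal. apply RInt_ext. intros x Hx. rewrite Rmin_left in Hx by lra.
  unfold qt. rewrite Rmax_right; lra.
Qed.

Lemma gam_der q dq x : C1_nonneg q dq -> 0 < x -> is_derive (gam q) x (2 * q x).
Proof.
  intros HC Hx. apply (is_derive_ext_loc (fun y => 2 * RInt (qt q) 0 y)).
  - exists (mkposreal x Hx). intros y Hy. apply ball_R in Hy. simpl in Hy.
    symmetry. apply (gam_RInt q dq); auto; lra.
  - apply D_scal. replace (q x) with (qt q x) by (unfold qt; rewrite Rmax_right; lra).
    apply (is_derive_RInt (qt q) (fun b => RInt (qt q) 0 b) 0 x).
    + exists (mkposreal 1 Rlt_0_1). intros y _. apply (RInt_correct (V:=R_CompleteNormedModule)).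
      apply (ex_RInt_continuous (V:=R_CompleteNormedModule)). intros; now apply (qt_cont q dq).
    + now apply (qt_cont q dq).
Qed.

Lemma q_der q dq x : C1_nonneg q dq -> 0 < x -> is_derive q x (dq x).
Proof. intros [H _] Hx. apply is_derive_Reals. now apply H. Qed.

Lemma dq_cont q dq x : C1_nonneg q dq -> 0 < x -> continuous dq x.
Proof. intros [_ [_ [_ H]]] Hx. apply cont_nonneg_cont; auto. apply H; lra. Qed.

Lemma D_ext (f g : R -> R) (x l : R) : (forall t, @eq R (f t) (g t)) -> is_derive f x l -> is_derive g x l.
Proof. intros. now apply (is_derive_ext f g). Qed.

Lemma D_opp (f : R -> R) x a : is_derive f x a -> is_derive (fun y => - f y) x (- a).
Proof. intros Hf. apply is_derive_Reals. apply is_derive_Reals in Hf. now apply derivable_pt_lim_opp. Qed.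

Ltac nzs := repeat match goal with |- _ /\ _ => split end; try assumption; try (apply Rgt_not_eq; lra); try (apply Rlt_not_eq; lra).

Definition Hyps q dq :=
  C1_nonneg q dq /\
  (forall y, 0 <= y -> ImpInt_conv (fun xi => exp (- gam q xi)) y) /\
  ImpInt_conv (fun y => exp (gam q y) * Itail q y) 0 /\
  tends_pinfty q /\
  lim_infty (fun x => dq x / (q x) ^ 2) 0.

Lemma q_ge1 q dq : Hyps q dq -> exists A, 1 <= A /\ forall x, A <= x -> 1 <= q x.
Proof.
  intros (_ & _ & _ & H & _). destruct (H 1) as [A HA]. exists (Rmax 1 A). split.
  apply Rmax_l. intros x Hx. apply HA. generalize (Rmax_r 1 A). lra.
Qed.

Lemma E_der q dq x : Hyps q dq -> 0 < x ->
  is_derive (fun y => exp (- gam q y)) x (- (2 * q x) * exp (- gam q x)).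
Proof.
  intros (HC & _) Hx. apply (D_exp (fun y => - gam q y)). apply D_opp. now apply (gam_der q dq).
Qed.

Lemma E_cont q dq x : Hyps q dq -> 0 < x -> continuous (fun y => exp (- gam q y)) x.
Proof. intros H Hx. eapply C_der. now apply (E_der q dq). Qed.

Lemma eg_der q dq x : Hyps q dq -> 0 < x ->
  is_derive (fun y => exp (gam q y)) x ((2 * q x) * exp (gam q x)).
Proof. intros (HC & _) Hx. apply (D_exp (gam q)). now apply (gam_der q dq). Qed.

Lemma I_isI q dq y : Hyps q dq -> 0 <= y -> isI (fun xi => exp (- gam q xi)) y (Itail q y).
Proof. intros (_ & H & _) Hy. unfold Itail. apply conv_isI. now apply H. Qed.

Lemma I_der q dq x : Hyps q dq -> 0 < x -> is_derive (Itail q) x (- exp (- gam q x)).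
Proof.
  intros H Hx. unfold Itail. apply (isI_derive (fun xi => exp (- gam q xi)) 0 (Itail q 0) x).
  now apply (I_isI q dq). auto. now apply (E_cont q dq).
Qed.

Lemma I_nonneg q dq y : Hyps q dq -> 0 <= y -> 0 <= Itail q y.
Proof.
  intros H Hy. apply (isI_nonneg (fun xi => exp (- gam q xi)) y). intros; apply Rlt_le, exp_pos.
  now apply (I_isI q dq).
Qed.

Lemma I_pos q dq y : Hyps q dq -> 0 < y -> 0 < Itail q y.
Proof.
  intros H Hy. apply (isI_pos (fun xi => exp (- gam q xi)) y). intros; apply exp_pos.
  intros; apply (E_cont q dq); auto; lra. apply (I_isI q dq); auto; lra.
Qed.

Lemma I_tail0 q dq : Hyps q dq -> is_lim (Itail q) p_infty 0.
Proof. intros H. apply (isI_tail0 _ 0 (Itail q 0)). apply (I_isI q dq); auto; lra. Qed.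

Lemma gam_mono q dq A x : Hyps q dq -> 0 < A -> (forall y, A <= y -> 1 <= q y) -> A <= x ->
  gam q A <= gam q x.
Proof.
  intros H HA Hq Hx. destruct (Req_dec A x) as [<-|Hne]. lra.
  apply Rlt_le. apply (incr_function_le (gam q) A p_infty (fun y => 2 * q y)).
  - intros y Hy _. simpl in Hy. apply (gam_der q dq). apply H. lra.
  - intros y Hy _. simpl in Hy. specialize (Hq y Hy). lra.
  - simpl; lra.
  - lra.
  - simpl; auto.
Qed.
Lemma exp_le x y : x <= y -> exp x <= exp y.
Proof. intros H. destruct (Req_dec x y) as [->|]. lra. apply Rlt_le, exp_increasing. lra. Qed.

Lemma inv_q_lim q dq : Hyps q dq -> is_lim (fun x => / q x) p_infty 0.
Proof.
  intros (_ & _ & _ & H & _). apply tends_pinfty_is_lim in H.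
  apply (is_lim_inv q p_infty p_infty) in H. exact H. discriminate.
Qed.

Lemma part1 q dq : Hyps q dq -> is_lim (fun z => 2 * q z * exp (gam q z) * Itail q z) p_infty 1.
Proof.
  intros H. pose proof H as (HC & H1a & H1b & H2a & H2b).
  destruct (q_ge1 q dq H) as [A0 [HA0 Hq]].
  apply lim_infty_is_lim in H2b.
  destruct (lim_ev_pt _ _ H2b 1 Rlt_0_1) as [A1 HA1].
  set (A := Rmax A0 A1).
  assert (HAA0 : A0 <= A) by apply Rmax_l. assert (HAA1 : A1 <= A) by apply Rmax_r.
  assert (Hqx : forall x, A <= x -> 1 <= q x) by (intros; apply Hq; lra).
  assert (Hdx : forall x, A <= x -> Rabs (dq x / q x ^ 2) < 1).
  { intros. replace (dq x / q x ^ 2) with (dq x / q x ^ 2 - 0) by ring. apply HA1; lra. }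
  assert (Hpos : forall x, A <= x -> 0 < 1 + dq x / (2 * q x ^ 2)).
  { intros x Hx. specialize (Hqx x Hx). specialize (Hdx x Hx).
    replace (dq x / (2 * q x ^ 2)) with (/2 * (dq x / q x ^ 2)) by (field; nzs).
    apply Rabs_lt_between in Hdx. lra. }
  assert (Hmain := isI_ratio (fun y => exp (- gam q y))
     (fun y => exp (- gam q y) * (1 + dq y / (2 * q y ^ 2)))
     (fun y => exp (- gam q y) / (2 * q y)) A (Itail q A)).
  assert (Hlim : is_lim (fun z => ImpInt (fun y => exp (- gam q y)) z / (exp (- gam q z) / (2 * q z)))
     p_infty 1).
  { apply Hmain; clear Hmain.
    - intros x Hx. assert (0 < x) by lra. specialize (Hqx x Hx).
      apply (C_mult (fun y => exp (- gam q y)) (fun y => 1 + dq y / (2 * q y ^ 2))).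
      now apply (E_cont q dq).
      apply (C_plus (fun _ => 1) (fun y => dq y / (2 * q y ^ 2))). apply C_const.
      apply (C_mult dq (fun y => / (2 * q y ^ 2))). now apply (dq_cont q dq).
      apply (C_inv (fun y => 2 * q y ^ 2)).
      eapply C_der. apply D_scal. apply is_derive_pow. now apply (q_der q dq).
      apply Rgt_not_eq. nra.
    - intros x Hx. assert (0 < x) by lra. specialize (Hqx x Hx).
      eapply D_eq. apply (is_derive_div (fun y => exp (- gam q y)) (fun y => 2 * q y)).
      now apply (E_der q dq). apply D_scal. now apply (q_der q dq). apply Rgt_not_eq; lra.
      field. nzs.
    - apply (is_lim_le_le_loc (fun _ => 0) (fun x => exp (- gam q A) * / q x)).
      + exists A. intros x Hx. assert (0 < x) by lra. assert (Hqxx := Hqx x ltac:(lra)).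
        split. apply Rlt_le, Rdiv_lt_0_compat. apply exp_pos. lra.
        unfold Rdiv. apply Rmult_le_compat. apply Rlt_le, exp_pos. apply Rlt_le, Rinv_0_lt_compat; lra.
        apply exp_le. apply Ropp_le_contravar. apply (gam_mono q dq A); auto; lra.
        apply Rinv_le_contravar; lra.
      + apply is_lim_const.
      + replace (Finite 0) with (Finite (exp (- gam q A) * 0)) by (f_equal; ring).
        apply lim_mult. apply is_lim_const. now apply (inv_q_lim q dq).
    - intros x Hx. apply Rmult_lt_0_compat. apply exp_pos. now apply Hpos.
    - intros x Hx. specialize (Hqx x Hx). apply Rdiv_lt_0_compat. apply exp_pos. lra.
    - apply (lim_ev (fun x => / (1 + / 2 * (dq x / q x ^ 2)))).
      + exists A. intros x Hx. specialize (Hpos x Hx). specialize (Hqx x Hx).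
        replace (/ 2 * (dq x / q x ^ 2)) with (dq x / (2 * q x ^ 2)) by (field; nzs).
        assert (exp (- gam q x) <> 0) by apply Rgt_not_eq, exp_pos.
        assert (2 * q x ^ 2 + dq x <> 0).
        { apply Rgt_not_eq. replace (2 * q x ^ 2 + dq x) with ((2 * q x ^ 2) * (1 + dq x / (2 * q x ^ 2))) by (field; nzs).
          apply Rmult_lt_0_compat; nra. }
        field. nzs.
      + replace (Finite 1) with (Finite (/ (1 + / 2 * 0))) by (f_equal; field).
        apply lim_inv. apply lim_plus. apply is_lim_const. apply lim_mult. apply is_lim_const.
        exact H2b. lra.
    - apply (I_isI q dq); auto; lra. }
  refine (lim_ev _ _ _ _ Hlim). exists A. intros z Hz. specialize (Hqx z Hz). fold (Itail q z). rewrite exp_Ropp.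
  assert (exp (gam q z) <> 0) by apply Rgt_not_eq, exp_pos. field. nzs.
Qed.
Definition Kf q z := 2 * q z * exp (gam q z) * Itail q z.

Lemma Kbounds q dq : Hyps q dq -> exists B, 1 <= B /\ forall x, B <= x ->
  1 <= q x /\ 7/8 <= Kf q x <= 9/8.
Proof.
  intros H. destruct (q_ge1 q dq H) as [A0 [HA0 Hq]].
  destruct (lim_ev_pt _ _ (part1 q dq H) (1/8) ltac:(lra)) as [A1 HA1].
  exists (Rmax A0 A1). split. generalize (Rmax_l A0 A1); lra.
  intros x Hx. generalize (Rmax_l A0 A1) (Rmax_r A0 A1); intros.
  split. apply Hq; lra. specialize (HA1 x ltac:(lra)). apply Rabs_lt_between in HA1.
  unfold Kf. lra.
Qed.

Lemma eI_eq q z : 0 < q z -> exp (gam q z) * Itail q z = Kf q z / (2 * q z).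
Proof. intros. unfold Kf. field. nzs. Qed.

Lemma h1_isI q dq z : Hyps q dq -> 0 <= z ->
  isI (fun y => exp (gam q y) * Itail q y) z
      (ImpInt (fun y => exp (gam q y) * Itail q y) 0 - RInt (fun y => exp (gam q y) * Itail q y) 0 z).
Proof. intros (_ & _ & H & _) Hz. apply isI_shift; auto. now apply conv_isI. Qed.

Lemma h1_cont q dq x : Hyps q dq -> 0 < x -> continuous (fun y => exp (gam q y) * Itail q y) x.
Proof.
  intros H Hx. apply (C_mult (fun y => exp (gam q y)) (Itail q)).
  eapply C_der. now apply (eg_der q dq). eapply C_der. now apply (I_der q dq).
Qed.

Lemma invq_cont q dq x : Hyps q dq -> 0 < x -> 0 < q x -> continuous (fun y => / q y) x.
Proof. intros (HC & _) Hx Hq. apply C_inv. eapply C_der. now apply (q_der q dq). nzs. Qed.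

Lemma part2 q dq : Hyps q dq -> exists B, 1 <= B /\
  (forall z, B <= z -> isI (fun y => / q y) z (Mfun q z)) /\
  is_lim (fun z => mfrak q z / Mfun q z) p_infty 1.
Proof.
  intros H. destruct (Kbounds q dq H) as [B [HB HK]].
  assert (Hex : forall z, B <= z -> isI (fun y => / q y) z (Mfun q z)).
  { intros z Hz. destruct (isI_exists (fun y => / q y) (fun y => exp (gam q y) * Itail q y) z 4
       (ImpInt (fun y => exp (gam q y) * Itail q y) 0 - RInt (fun y => exp (gam q y) * Itail q y) 0 z) (fun x Hx => invq_cont q dq x H ltac:(lra) ltac:(destruct (HK x ltac:(lra)); lra))
       ltac:(lra)) as [l Hl].
    - intros x Hx. apply Rmult_le_pos. apply Rlt_le, exp_pos. apply (I_nonneg q dq); auto; lra.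
    - intros x Hx. destruct (HK x ltac:(lra)) as [Hq1 Hk]. rewrite eI_eq by lra. split.
      apply Rlt_le, Rinv_0_lt_compat; lra.
      apply Rmult_le_reg_l with (q x). lra. rewrite Rinv_r by nzs.
      replace (q x * (4 * (Kf q x / (2 * q x)))) with (2 * Kf q x) by (field; nzs). lra.
    - apply (h1_isI q dq); auto; lra.
    - unfold Mfun. now rewrite (ImpInt_eq _ _ _ Hl). }
  exists B. split; [|split]; auto.
  assert (Hmain := isI_ratio (fun y => exp (gam q y) * Itail q y) (fun y => / (2 * q y))
     (fun z => Mfun q z / 2) (B + 1)
     (ImpInt (fun y => exp (gam q y) * Itail q y) 0 - RInt (fun y => exp (gam q y) * Itail q y) 0 (B + 1))).
  assert (Hlim : is_lim (fun z => ImpInt (fun y => exp (gam q y) * Itail q y) z / (Mfun q z / 2))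
     p_infty 1).
  { apply Hmain; clear Hmain.
    - intros x Hx. destruct (HK x ltac:(lra)) as [Hq1 _]. apply (C_inv (fun y => 2 * q y)).
      eapply C_der. apply D_scal. apply (q_der q dq). apply H. lra. nzs.
    - intros x Hx. destruct (HK x ltac:(lra)) as [Hq1 _].
      apply (D_ext (fun z => / 2 * Mfun q z)). intros t; unfold Rdiv; ring.
      eapply D_eq. apply D_scal. unfold Mfun.
      apply (isI_derive (fun y => / q y) B (Mfun q B) x). now apply Hex; lra. lra.
      apply (invq_cont q dq); auto; lra. field. nzs.
    - replace (Finite 0) with (Finite (0 * / 2)) by (f_equal; ring).
      apply (lim_mult (fun z => Mfun q z) (fun _ => / 2)). 2: apply is_lim_const.
      unfold Mfun. apply (isI_tail0 _ B (Mfun q B)). now apply Hex; lra.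
    - intros x Hx. destruct (HK x ltac:(lra)) as [Hq1 _]. apply Rinv_0_lt_compat. lra.
    - intros x Hx. destruct (HK x ltac:(lra)) as [Hq1 _]. cut (0 < Mfun q x). lra.
      apply (isI_pos (fun y => / q y) x). intros y Hy. destruct (HK y ltac:(lra)); apply Rinv_0_lt_compat; lra.
      intros y Hy. apply (invq_cont q dq); auto; try lra. destruct (HK y ltac:(lra)); lra.
      apply Hex; lra.
    - apply (lim_ev (Kf q)). exists B. intros x Hx. destruct (HK x Hx) as [Hq1 _].
      unfold Kf. field. nzs. apply lim_infty_is_lim. apply lim_infty_is_lim. apply (part1 q dq H).
    - apply (h1_isI q dq); auto; lra. }
  refine (lim_ev _ _ _ _ Hlim). exists (B + 1). intros z Hz.
  assert (0 < Mfun q z).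
  { destruct (HK z ltac:(lra)) as [Hq1 _].
    apply (isI_pos (fun y => / q y) z). intros y Hy. destruct (HK y ltac:(lra)); apply Rinv_0_lt_compat; lra.
    intros y Hy. apply (invq_cont q dq); auto; try lra. destruct (HK y ltac:(lra)); lra.
    apply Hex; lra. }
  unfold mfrak. field. nzs.
Qed.
Lemma C_opp (f : R -> R) x : continuous f x -> continuous (fun y => - f y) x.
Proof. intros. exact (continuous_opp (V:=R_NormedModule) f x H). Qed.

Lemma K_cont q dq x : Hyps q dq -> 0 < x -> continuous (Kf q) x.
Proof.
  intros H Hx. unfold Kf.
  apply (C_mult (fun y => 2 * q y * exp (gam q y)) (Itail q)).
  apply (C_mult (fun y => 2 * q y) (fun y => exp (gam q y))).
  eapply C_der. apply D_scal. apply (q_der q dq). apply H. auto.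
  eapply C_der. now apply (eg_der q dq).
  eapply C_der. now apply (I_der q dq).
Qed.

Lemma I_cont q dq x : Hyps q dq -> 0 < x -> continuous (Itail q) x.
Proof. intros. eapply C_der. now apply (I_der q dq). Qed.

Lemma eg_cont q dq x : Hyps q dq -> 0 < x -> continuous (fun y => exp (gam q y)) x.
Proof. intros. eapply C_der. now apply (eg_der q dq). Qed.

Lemma J3_cont q dq x : Hyps q dq -> 0 < x -> continuous (fun y => exp (gam q y) * Itail q y ^ 2) x.
Proof.
  intros H Hx. apply (C_mult (fun y => exp (gam q y)) (fun y => Itail q y ^ 2)).
  now apply (eg_cont q dq). eapply C_der. apply is_derive_pow. now apply (I_der q dq).
Qed.

Lemma eI_lim0 q dq : Hyps q dq -> is_lim (fun z => exp (gam q z) * Itail q z) p_infty 0.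
Proof.
  intros H. destruct (q_ge1 q dq H) as [A0 [HA0 Hq]].
  apply (lim_ev (fun z => Kf q z * (/ 2 * / q z))).
  - exists A0. intros x Hx. specialize (Hq x Hx). rewrite eI_eq by lra. field. nzs.
  - replace (Finite 0) with (Finite (1 * (/ 2 * 0))) by (f_equal; ring).
    apply lim_mult. apply (part1 q dq H). apply lim_mult. apply is_lim_const.
    apply (inv_q_lim q dq H).
Qed.

Lemma part3 q dq : Hyps q dq -> exists B, 1 <= B /\
  (forall z, B <= z -> isI (fun y => exp (gam q y) * Itail q y ^ 2) z (Jtail q z)) /\
  is_lim (fun z => Jtail q z / (exp (2 * gam q z) * Itail q z ^ 3)) p_infty 1.
Proof.
  intros H. destruct (Kbounds q dq H) as [B [HB HK]].
  assert (HeI : forall x, B <= x -> 0 <= exp (gam q x) * Itail q x <= 1).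
  { intros x Hx. destruct (HK x Hx). rewrite eI_eq by lra. split.
    apply Rmult_le_pos. lra. apply Rlt_le, Rinv_0_lt_compat; lra.
    apply Rmult_le_reg_l with (2 * q x). lra. replace (2 * q x * (Kf q x / (2 * q x))) with (Kf q x) by (field; nzs).
    lra. }
  assert (Hex : forall z, B <= z -> isI (fun y => exp (gam q y) * Itail q y ^ 2) z (Jtail q z)).
  { intros z Hz. destruct (isI_exists (fun y => exp (gam q y) * Itail q y ^ 2) (fun y => exp (- gam q y)) z 1
       (Itail q z) (fun x Hx => J3_cont q dq x H ltac:(lra)) ltac:(lra)) as [l Hl].
    - intros; apply Rlt_le, exp_pos.
    - intros x Hx. specialize (HeI x ltac:(lra)).
      assert (E : exp (gam q x) * Itail q x ^ 2 = (exp (gam q x) * Itail q x) ^ 2 * exp (- gam q x)).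
      { rewrite exp_Ropp. assert (exp (gam q x) <> 0) by apply Rgt_not_eq, exp_pos. field. auto. }
      rewrite E. assert (0 < exp (- gam q x)) by apply exp_pos. split. apply Rmult_le_pos. apply pow2_ge_0. lra.
      set (u := exp (gam q x) * Itail q x) in *. rewrite Rmult_1_l. rewrite <- (Rmult_1_l (exp (- gam q x))) at 2.
      apply Rmult_le_compat_r. lra. nra.
    - apply (I_isI q dq); auto; lra.
    - unfold Jtail. now rewrite (ImpInt_eq _ _ _ Hl). }
  exists B. split; [|split]; auto.
  assert (Hg3 : forall x, B <= x -> 0 < exp (gam q x) * Itail q x ^ 2 * (3 - 2 * Kf q x)).
  { intros x Hx. destruct (HK x Hx). assert (0 < Itail q x) by (apply (I_pos q dq); auto; lra).
    apply Rmult_lt_0_compat. apply Rmult_lt_0_compat. apply exp_pos. nra. lra. }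
  assert (HG3 : forall x, B <= x -> 0 < exp (2 * gam q x) * Itail q x ^ 3).
  { intros x Hx. assert (0 < Itail q x) by (apply (I_pos q dq); auto; lra).
    apply Rmult_lt_0_compat. apply exp_pos. apply pow_lt; auto. }
  apply (isI_ratio (fun y => exp (gam q y) * Itail q y ^ 2)
     (fun y => exp (gam q y) * Itail q y ^ 2 * (3 - 2 * Kf q y))
     (fun z => exp (2 * gam q z) * Itail q z ^ 3) (B + 1) (Jtail q (B + 1))).
  - intros x Hx. apply (C_mult (fun y => exp (gam q y) * Itail q y ^ 2) (fun y => 3 - 2 * Kf q y)).
    apply (J3_cont q dq); auto; lra.
    apply (C_plus (fun _ => 3) (fun y => - (2 * Kf q y))). apply C_const.
    apply C_opp. apply (C_mult (fun _ => 2) (Kf q)). apply C_const. apply (K_cont q dq); auto; lra.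
  - intros x Hx. assert (Hx0 : 0 < x) by lra.
    eapply D_eq. apply (D_mult (fun z => exp (2 * gam q z)) (fun z => Itail q z ^ 3)).
    apply (D_exp (fun z => 2 * gam q z)). apply D_scal. apply (gam_der q dq). apply H. auto.
    apply is_derive_pow. apply (I_der q dq); auto.
    replace (INR 3) with 3 by (simpl; ring). simpl pred.
    replace (2 * gam q x) with (gam q x + gam q x) by ring. rewrite exp_plus, exp_Ropp.
    unfold Kf. assert (exp (gam q x) <> 0) by apply Rgt_not_eq, exp_pos. field. auto.
  - apply (lim_ev (fun z => (exp (gam q z) * Itail q z) ^ 2 * Itail q z)).
    + exists 0. intros z _. replace (2 * gam q z) with (gam q z + gam q z) by ring. rewrite exp_plus. ring.
    + replace (Finite 0) with (Finite ((0 ^ 2) * 0)) by (f_equal; ring).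
      apply lim_mult. simpl. apply (lim_ev (fun z => (exp (gam q z) * Itail q z) * ((exp (gam q z) * Itail q z) * 1))).
      exists 0. intros; ring.
      replace (Finite (0 * (0 * 1))) with (Finite (0 * (0 * 1))) by reflexivity.
      apply lim_mult. apply (eI_lim0 q dq H). apply lim_mult. apply (eI_lim0 q dq H). apply is_lim_const.
      apply (I_tail0 q dq H).
  - intros x Hx. apply Hg3; lra.
  - intros x Hx. apply HG3; lra.
  - apply (lim_ev (fun x => / (3 - 2 * Kf q x))).
    + exists B. intros x Hx. specialize (Hg3 x Hx). destruct (HK x Hx).
      assert (0 < Itail q x) by (apply (I_pos q dq); auto; lra).
      assert (exp (gam q x) <> 0) by apply Rgt_not_eq, exp_pos.
      field. split. lra. split; auto. apply Rgt_not_eq; lra.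
    + replace (Finite 1) with (Finite (/ (3 - 2 * 1))) by (f_equal; field).
      apply lim_inv. apply lim_minus. apply is_lim_const. apply lim_mult. apply is_lim_const.
      apply (part1 q dq H). lra.
  - apply Hex; lra.
Qed.
Lemma Q3_cont q dq x : Hyps q dq -> 0 < x -> 0 < q x -> continuous (fun y => / q y ^ 3) x.
Proof.
  intros H Hx Hq. apply (C_inv (fun y => q y ^ 3)). eapply C_der. apply is_derive_pow.
  apply (q_der q dq). apply H. auto. apply Rgt_not_eq. apply pow_lt; auto.
Qed.

Lemma part4 q dq : Hyps q dq ->
  (exists z0, forall z, z0 <= z ->
     ImpInt_conv (fun y => / (q y) ^ 3) z /\
     ImpInt_conv (fun y => exp (gam q y) * Jtail q y) z) /\
  is_lim (fun z => 8 * ImpInt (fun y => exp (gam q y) * Jtail q y) z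
                       / ImpInt (fun y => / (q y) ^ 3) z) p_infty 1.
Proof.
  intros H. destruct (Kbounds q dq H) as [B [HB HK]].
  destruct (part2 q dq H) as [B2 [HB2 [HM _]]].
  destruct (part3 q dq H) as [B3 [HB3 [HJ HJlim]]].
  destruct (lim_ev_pt _ _ HJlim 1 Rlt_0_1) as [A4 HA4].
  set (C := Rmax (Rmax B B2) (Rmax B3 A4)).
  assert (HCB : B <= C) by (unfold C; generalize (Rmax_l B B2) (Rmax_l (Rmax B B2) (Rmax B3 A4)); lra).
  assert (HCB2 : B2 <= C) by (unfold C; generalize (Rmax_r B B2) (Rmax_l (Rmax B B2) (Rmax B3 A4)); lra).
  assert (HCB3 : B3 <= C) by (unfold C; generalize (Rmax_l B3 A4) (Rmax_r (Rmax B B2) (Rmax B3 A4)); lra).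
  assert (HCA4 : A4 <= C) by (unfold C; generalize (Rmax_r B3 A4) (Rmax_r (Rmax B B2) (Rmax B3 A4)); lra).
  assert (Hq1 : forall x, C <= x -> 1 <= q x) by (intros x Hx; apply (HK x); lra).
  assert (HIp : forall x, C <= x -> 0 < Itail q x) by (intros x Hx; apply (I_pos q dq); auto; lra).
  assert (HeI : forall x, C <= x -> 0 <= exp (gam q x) * Itail q x <= 1).
  { intros x Hx. destruct (HK x ltac:(lra)). rewrite eI_eq by lra. split.
    apply Rmult_le_pos. lra. apply Rlt_le, Rinv_0_lt_compat; lra.
    apply Rmult_le_reg_l with (2 * q x). lra. replace (2 * q x * (Kf q x / (2 * q x))) with (Kf q x) by (field; nzs).
    lra. }
  assert (HQ : forall z, C <= z -> isI (fun y => / q y ^ 3) z (ImpInt (fun y => / q y ^ 3) z)).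
  { intros z Hz. destruct (isI_exists (fun y => / q y ^ 3) (fun y => / q y) z 1 (Mfun q z)
       (fun x Hx => Q3_cont q dq x H ltac:(lra) ltac:(specialize (Hq1 x ltac:(lra)); lra)) ltac:(lra)) as [l Hl].
    - intros x Hx. specialize (Hq1 x ltac:(lra)). apply Rlt_le, Rinv_0_lt_compat. lra.
    - intros x Hx. specialize (Hq1 x ltac:(lra)). split.
      apply Rlt_le, Rinv_0_lt_compat, pow_lt; lra.
      rewrite Rmult_1_l. apply Rinv_le_contravar. lra. simpl. nra.
    - apply HM; lra.
    - now rewrite (ImpInt_eq _ _ _ Hl). }
  assert (HJc : forall x, C < x -> continuous (fun y => exp (gam q y) * Jtail q y) x).
  { intros x Hx. apply (C_mult (fun y => exp (gam q y)) (Jtail q)).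
    apply (eg_cont q dq); auto; lra. eapply C_der. unfold Jtail.
    apply (isI_derive (fun y => exp (gam q y) * Itail q y ^ 2) C (Jtail q C) x). apply HJ; lra. lra.
    apply (J3_cont q dq); auto; lra. }
  assert (HJn : forall x, C <= x -> 0 <= Jtail q x).
  { intros x Hx. apply (isI_nonneg (fun y => exp (gam q y) * Itail q y ^ 2) x).
    intros. apply Rmult_le_pos. apply Rlt_le, exp_pos. apply pow2_ge_0. apply HJ; lra. }
  assert (HF : forall z, C + 1 <= z -> exists l, isI (fun y => exp (gam q y) * Jtail q y) z l).
  { intros z Hz. apply (isI_exists _ (fun y => exp (gam q y) * Itail q y) z 2
       (ImpInt (fun y => exp (gam q y) * Itail q y) 0 - RInt (fun y => exp (gam q y) * Itail q y) 0 z)).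
    - intros x Hx; apply HJc; lra.
    - lra.
    - intros x Hx. apply Rmult_le_pos. apply Rlt_le, exp_pos. apply (I_nonneg q dq); auto; lra.
    - intros x Hx. split. apply Rmult_le_pos. apply Rlt_le, exp_pos. apply HJn; lra.
      assert (HG : 0 < exp (2 * gam q x) * Itail q x ^ 3).
      { apply Rmult_lt_0_compat. apply exp_pos. apply pow_lt, HIp; lra. }
      assert (HJ2 : Jtail q x <= 2 * (exp (2 * gam q x) * Itail q x ^ 3)).
      { specialize (HA4 x ltac:(lra)). apply Rabs_lt_between in HA4.
        assert (0 < Itail q x) by (apply HIp; lra). assert (0 < exp (2 * gam q x)) by apply exp_pos.
        assert (HJe : Jtail q x = Jtail q x / (exp (2 * gam q x) * Itail q x ^ 3) * (exp (2 * gam q x) * Itail q x ^ 3)) by (field; nzs).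
        rewrite HJe. apply Rmult_le_compat_r; lra. }
      apply Rle_trans with (exp (gam q x) * (2 * (exp (2 * gam q x) * Itail q x ^ 3))).
      apply Rmult_le_compat_l. apply Rlt_le, exp_pos. auto.
      replace (exp (gam q x) * (2 * (exp (2 * gam q x) * Itail q x ^ 3))) with (2 * (exp (gam q x) * Itail q x) ^ 3).
      2:{ replace (2 * gam q x) with (gam q x + gam q x) by ring. rewrite exp_plus. ring. }
      specialize (HeI x ltac:(lra)). set (u := exp (gam q x) * Itail q x) in *.
      assert (u ^ 3 <= u) by (simpl; nra). lra.
    - apply (h1_isI q dq); auto; lra. }
  split.
  { exists (C + 1). intros z Hz. split. apply (isI_conv _ _ _ (HQ z ltac:(lra))).
    destruct (HF z Hz) as [l Hl]. now apply (isI_conv _ _ l). }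
  assert (HQp : forall z, C <= z -> 0 < ImpInt (fun y => / q y ^ 3) z).
  { intros z Hz. apply (isI_pos (fun y => / q y ^ 3) z).
    intros y Hy. specialize (Hq1 y ltac:(lra)). apply Rinv_0_lt_compat, pow_lt; lra.
    intros y Hy. apply (Q3_cont q dq); auto; try lra. specialize (Hq1 y ltac:(lra)); lra. apply HQ; auto. }
  destruct (HF (C + 1) ltac:(lra)) as [l Hl].
  assert (Hmain := isI_ratio (fun y => exp (gam q y) * Jtail q y) (fun y => / q y ^ 3 / 8)
     (fun z => ImpInt (fun y => / q y ^ 3) z / 8) (C + 1) l).
  assert (Hlim : is_lim (fun z => ImpInt (fun y => exp (gam q y) * Jtail q y) z
      / (ImpInt (fun y => / q y ^ 3) z / 8)) p_infty 1).
  { apply Hmain; clear Hmain.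
    - intros x Hx. apply (C_mult (fun y => / q y ^ 3) (fun _ => / 8)).
      apply (Q3_cont q dq); auto; try lra. specialize (Hq1 x ltac:(lra)); lra. apply C_const.
    - intros x Hx. apply (D_ext (fun z => / 8 * ImpInt (fun y => / q y ^ 3) z)). intros t; unfold Rdiv; ring.
      eapply D_eq. apply D_scal.
      apply (isI_derive (fun y => / q y ^ 3) C (ImpInt (fun y => / q y ^ 3) C) x). apply HQ; lra. lra.
      apply (Q3_cont q dq); auto; try lra. specialize (Hq1 x ltac:(lra)); lra.
      unfold Rdiv. ring.
    - replace (Finite 0) with (Finite (0 * / 8)) by (f_equal; ring).
      apply (lim_mult (fun z => ImpInt (fun y => / q y ^ 3) z) (fun _ => / 8)). 2: apply is_lim_const.
      apply (isI_tail0 _ C _ (HQ C ltac:(lra))).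
    - intros x Hx. specialize (Hq1 x ltac:(lra)). apply Rdiv_lt_0_compat. apply Rinv_0_lt_compat, pow_lt; lra. lra.
    - intros x Hx. specialize (HQp x ltac:(lra)). lra.
    - apply (lim_ev (fun x => Jtail q x / (exp (2 * gam q x) * Itail q x ^ 3) * (Kf q x * (Kf q x * Kf q x)))).
      + exists C. intros x Hx. specialize (Hq1 x Hx). specialize (HIp x Hx).
        assert (exp (gam q x) <> 0) by apply Rgt_not_eq, exp_pos.
        replace (2 * gam q x) with (gam q x + gam q x) by ring. rewrite exp_plus. unfold Kf.
        field. nzs.
      + replace (Finite 1) with (Finite (1 * (1 * (1 * 1)))) by (f_equal; ring).
        apply lim_mult. exact HJlim. apply lim_mult. apply (part1 q dq H).
        apply lim_mult; apply (part1 q dq H).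
    - exact Hl. }
  refine (lim_ev _ _ _ _ Hlim). exists C. intros z Hz. specialize (HQp z Hz). field. nzs.
Qed.

Theorem corollaryA2 (q dq : R -> R) :
  C1_nonneg q dq ->
  (* (H1) *)
  (forall y, 0 <= y -> ImpInt_conv (fun xi => exp (- gam q xi)) y) ->
  ImpInt_conv (fun y => exp (gam q y) * Itail q y) 0 ->
  (* (H2) *)
  tends_pinfty q ->
  lim_infty (fun x => dq x / (q x) ^ 2) 0 ->
  (* (i) *)
  lim_infty (fun z => 2 * q z * exp (gam q z) * Itail q z) 1 /\
  (* (ii) *)
  (exists z0, forall z, z0 <= z -> ImpInt_conv (fun y => / q y) z) /\
  lim_infty (fun z => mfrak q z / Mfun q z) 1 /\
  (* (iii) *)
  (exists z0, forall z, z0 <= z ->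
     ImpInt_conv (fun y => exp (gam q y) * (Itail q y) ^ 2) z) /\
  lim_infty (fun z => Jtail q z / (exp (2 * gam q z) * (Itail q z) ^ 3)) 1 /\
  (* (iv) *)
  (exists z0, forall z, z0 <= z ->
     ImpInt_conv (fun y => / (q y) ^ 3) z /\
     ImpInt_conv (fun y => exp (gam q y) * Jtail q y) z) /\
  lim_infty (fun z => 8 * ImpInt (fun y => exp (gam q y) * Jtail q y) z
                       / ImpInt (fun y => / (q y) ^ 3) z) 1.
Proof.
  intros HC H1a H1b H2a H2b.
  assert (H : Hyps q dq) by exact (conj HC (conj H1a (conj H1b (conj H2a H2b)))).
  destruct (part2 q dq H) as [B2 [_ [HM HMlim]]].
  destruct (part3 q dq H) as [B3 [_ [HJ HJlim]]].
  destruct (part4 q dq H) as [H4a H4b].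
  split. apply lim_infty_is_lim, (part1 q dq H).
  split. exists B2. intros z Hz. apply (isI_conv _ _ _ (HM z Hz)).
  split. now apply lim_infty_is_lim.
  split. exists B3. intros z Hz. apply (isI_conv _ _ _ (HJ z Hz)).
  split. now apply lim_infty_is_lim.
  split. exact H4a.
  now apply lim_infty_is_lim.
Qed.
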